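(* There is an absolute constant $C$ such that the following holds for every integer $n\ge 2$: if $(x_1,\dots,x_n)\in A_n$ is a point at which $S_n$ attains its maximum over $A_n$ and $x_1=n$, then $S_n(x_1,\dots,x_n)\le n^3+Cn^2$.
   Context: For an integer $n\ge 2$, $A_n$ is the set of integer vectors $(x_1,\dots,x_n)\in\mathbb{Z}^n$ such that $n\ge x_1\ge x_2\ge\cdots\ge x_n\ge 0$, $\sum_{i=1}^k x_i\le 2n+6k-16$ for every $k\in\{1,\dots,n\}$, and $\sum_{i=1}^n x_i\le 6n-12$. For an integer $m\ge 2$, $S_m:\mathbb{R}^m\to\mathbb{R}$ is defined by $S_m(x_1,\dots,x_m)=\sum_{i=1}^{m-1}\sum_{j=i+1}^{m} x_i x_j^2$. *)

(* Defs.v *)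
From mathcomp Require Import all_boot all_order all_algebra.
Set Implicit Arguments. Unset Strict Implicit. Unset Printing Implicit Defensive.
Import Order.TTheory GRing.Theory Num.Theory.
Local Open Scope ring_scope.

(* Vectors (x_1,...,x_n) in Z^n are represented as functions x : nat -> int,
   using 1-based indices 1..n; values outside 1..n are irrelevant. *)

Definition inA (n : nat) (x : nat -> int) : Prop :=
  [/\ x 1%N <= n%:Z,
      (forall i : nat, (1 <= i < n)%N -> x i.+1 <= x i),
      0 <= x n,
      (forall k : nat, (1 <= k <= n)%N ->
          \sum_(1 <= i < k.+1) x i <= 2 * n%:Z + 6 * k%:Z - 16)
    & \sum_(1 <= i < n.+1) x i <= 6 * n%:Z - 12].

Definition S (n : nat) (x : nat -> int) : int :=
  \sum_(1 <= i < n) \sum_(i.+1 <= j < n.+1) x i * x j ^+ 2.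

(* Main.v *)
Require Import Defs.
From mathcomp Require Import all_boot all_order all_algebra.
From mathcomp Require Import zify ring lra.
Import Order.TTheory GRing.Theory Num.Theory.
Local Open Scope ring_scope.

Definition Pm (x : nat -> int) (m : nat) : int := \sum_(1 <= i < m.+1) x i.
Definition Sm (x : nat -> int) (m : nat) : int :=
  \sum_(1 <= i < m) \sum_(i.+1 <= j < m.+1) x i * x j ^+ 2.

Lemma Prec x m : Pm x m.+1 = Pm x m + x m.+1.
Proof. by rewrite /Pm big_nat_recr. Qed.

Lemma Srec x m : Sm x m.+1 = Sm x m + x m.+1 ^+ 2 * Pm x m.
Proof.
rewrite /Sm /Pm.
under eq_big_nat => i /andP[_ Hi] do rewrite big_nat_recr //=.
rewrite big_split /= -big_distrl /= mulrC; congr (_ + _).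
case: m => [|m]; first by rewrite !big_geq.
by rewrite big_nat_recr //= [X in _ + X]big_geq // addr0.
Qed.

Lemma nonneg n x : inA n x -> forall i, (1 <= i <= n)%N -> 0 <= x i.
Proof.
case=> _ Hdec Hn _ _.
suff H : forall d, (d < n)%N -> 0 <= x (n - d)%N.
  move=> i /andP[H1 H2]; have := H (n - i)%N; rewrite subKn //; apply; lia.
elim=> [|d IH] Hd; first by rewrite subn0.
apply: le_trans (IH (ltnW Hd)) _.
have -> : (n - d = (n - d.+1).+1)%N by lia.
apply: Hdec; lia.
Qed.

Lemma main n x : (2 <= n)%N -> inA n x -> x 1%N = n%:Z ->
  forall k, (k + 2 <= n)%N ->
   let m := (k + 2)%N in
   Sm x m <= - n%:Z * x 2%N ^+ 2 + 2 * n%:Z * (n%:Z + 6) * x 2%N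
     + 12 * n%:Z * (Pm x m - n%:Z)
     + 2 * n%:Z * x m * (Pm x m - 2 * n%:Z - 6 * m%:Z)
     + 48 * n%:Z * (Pm x m - n%:Z - x 2%N)
   /\ m%:Z * x m <= Pm x m.
Proof.
move=> Hn2 HA Hx1.
have Hnn := @nonneg n x HA.
case: (HA) => _ Hdec _ Hpre _.
elim=> [|k IH] Hk m.
  have P2 : Pm x 2 = n%:Z + x 2%N by rewrite /Pm big_nat_recr //= big_nat1 Hx1.
  have S2 : Sm x 2 = n%:Z * x 2%N ^+ 2.
    by rewrite /Sm big_nat1 big_nat1 Hx1.
  have h12 : x 2%N <= x 1%N by apply: Hdec; lia.
  rewrite /m add0n P2 S2; split; last by rewrite Hx1 in h12; lia.
  have -> : (2%:Z = 2) by []. 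
  lra.
have [IH1 IH2] := IH (ltnW Hk).
rewrite /m.
have -> : (k.+1 + 2 = (k + 2).+1)%N by lia.
move: IH1 IH2; set p := (k + 2)%N => IH1 IH2.
rewrite Srec Prec.
have Hpn : (p.+1 <= n)%N by rewrite /p; lia.
have hdec : x p.+1 <= x p by apply: Hdec; rewrite /p; lia.
have hx' : 0 <= x p.+1 by apply: Hnn; rewrite /p; lia.
have hpre : Pm x p <= 2 * n%:Z + 6 * p%:Z - 16 by apply: Hpre; rewrite /p; lia.
have hpn : (p%:Z <= n%:Z) by rewrite lez_nat; lia.
have hp0 : (0 <= p%:Z) by [].
have hS : (p.+1)%:Z = p%:Z + 1 by rewrite -addn1 PoszD.
rewrite hS.
set N := n%:Z in hpre hpn IH1 IH2 *.
set M := p%:Z in hpre hpn hp0 IH1 IH2 *.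
set a := x p in IH1 IH2 hdec.
set b := x p.+1 in hdec hx' *.
set P := Pm x p in IH1 IH2 hpre *.
have hN : 0 <= N by [].
have h1 : 2 * N * a * (P - 2 * N - 6 * M) <= 2 * N * b * (P - 2 * N - 6 * M).
  have : 0 <= 2 * N * (a - b) * (2 * N + 6 * M - P) by apply: mulr_ge0; [apply: mulr_ge0; lra|lra].
  lra.
have h3 : M * b <= P by apply: le_trans IH2; apply: ler_wpM2l.
have h2 : b ^+ 2 * P <= b ^+ 2 * (2 * N + 6 * M) by apply: ler_wpM2l; [apply: sqr_ge0|lra].
have h4 : 6 * M * b ^+ 2 <= 48 * N * b.
  have : b * (M * b) <= b * (8 * N) by apply: ler_wpM2l; lra.
  lra.
split; [lra|].
have : M * b <= M * a by apply: ler_wpM2l.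
lra.
Qed.

Theorem lemma7 :
  exists C : int, forall (n : nat), (2 <= n)%N ->
    forall x : nat -> int, inA n x ->
      (forall y : nat -> int, inA n y -> S n y <= S n x) ->
      x 1%N = n%:Z ->
      S n x <= n%:Z ^+ 3 + C * n%:Z ^+ 2.
Proof.
exists 312 => n Hn x HA _ Hx1.
have [H1 _] := @main n x Hn HA Hx1 (n - 2)%N ltac:(lia).
rewrite (_ : (n - 2 + 2 = n)%N) in H1; last by lia.
have Hnn := @nonneg n x HA.
case: (HA) => _ Hdec Hxn _ Htot.
have h2 : x 2%N <= n%:Z by rewrite -Hx1; apply: Hdec; lia.
have h20 : 0 <= x 2%N by apply: Hnn; lia.
change (S n x) with (Sm x n).
move: H1 Htot; rewrite -/(Pm x n).
set N := n%:Z in Hx1 h2 *.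
set a := x 2%N in h2 h20 *.
set b := x n in Hxn *.
set P := Pm x n => H1 Htot.
have hN : 0 <= N by [].
have e1 : 0 <= N * (N - a) ^+ 2 by apply: mulr_ge0 => //; apply: sqr_ge0.
have e2 : 0 <= N * (N - a) by apply: mulr_ge0; lra.
have e3 : 0 <= N * b * (8 * N - P) by apply: mulr_ge0; [apply: mulr_ge0|lra].
have e4 : 0 <= N * (6 * N - 12 - P) by apply: mulr_ge0; lra.
have e5 : 0 <= N * a by apply: mulr_ge0.
have e6 : 0 <= N * N by apply: mulr_ge0.
nra.
Qed.
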